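(* Let $q \in Q$ and $x \in [0,1]^{|N|}$. (i) $v^{\mathrm{tight}}_q(x) \le v^{\mathrm{agg}}_q(x) \le v^{\mathrm{disagg}}_q(x)$. (ii) If $R_q$ consists of a single path, then $v^{\mathrm{agg}}_q(x) = v^{\mathrm{disagg}}_q(x)$. (iii) If $R_q$ consists of a single simple path, then $v^{\mathrm{tight}}_q(x) = v^{\mathrm{agg}}_q(x) = v^{\mathrm{disagg}}_q(x)$.
   Context: Let $G=(N,A)$ be a finite undirected graph with edge lengths $\ell_e > 0$, and let $d>0$ be the travel range, with $\ell_e \le d$ for every edge. A path is a sequence $r=(v_0,v_1,\dots,v_m)$, $m\ge 1$, of nodes in which consecutive nodes are joined by an edge (nodes may repeat); $r$ is simple if its nodes are distinct. For $x \in \{0,1\}^N$ ($x_j = 1$ meaning a charging station at node $j$), path $r$ is repeatedly traversable under $x$ if, letting $W=(v_0,\dots,v_m,v_{m-1},\dots,v_0)$ be the round trip along $r$, at least one node of $r$ has $x_j=1$ and, in the infinite periodic repetition of $W$, the distance travelled between any two consecutive visits to nodes with a station is at most $d$. Let $Q$ be a finite set of demands; each $q\in Q$ has a flow volume $f_q \ge 0$ and a finite nonempty set $R_q$ of paths. For each $q \in Q$ and $r \in R_q$, $\mathcal{D}_{q,r}\subseteq 2^N$ is a family of node sets such that for every $x \in \{0,1\}^N$: $r$ is repeatedly traversable under $x$ if and only if $\sum_{j\in S} x_j \ge 1$ for all $S \in \mathcal{D}_{q,r}$. Define $\mathcal{C}_q = \{ \bigcup_{r \in R_q} S_r : S_r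 \in \mathcal{D}_{q,r} \text{ for each } r \in R_q\}$. For $x \in [0,1]^{|N|}$ define $v^{\mathrm{disagg}}_q(x) = \max\{ \sum_{r \in R_q} f_q z_r : z \in [0,1]^{|R_q|},\ \sum_{r\in R_q} z_r \le 1,\ \sum_{j \in S} x_j \ge z_r \ \forall r \in R_q, S \in \mathcal{D}_{q,r}\}$, $v^{\mathrm{agg}}_q(x) = \max\{ f_q y : y \in [0,1],\ \sum_{j \in S} x_j \ge y \ \forall S \in \mathcal{C}_q\}$. Let $K_q$ be the set of all concave functions $v$ on $[0,1]^{|N|}$ with $v(x') = v^{\mathrm{agg}}_q(x')$ for all $x' \in \{0,1\}^{|N|}$, and $v^{\mathrm{tight}}_q(x) = \inf_{v \in K_q} v(x)$. *)

(* Defs.v *)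
From HB Require Import structures.
From mathcomp Require Import all_boot all_order all_algebra.
From mathcomp Require Import classical_sets reals.
Set Implicit Arguments. Unset Strict Implicit. Unset Printing Implicit Defensive.
Import Order.TTheory GRing.Theory Num.Theory.
Local Open Scope ring_scope.
Local Open Scope classical_set_scope.

Section Defs.
Variables (R : realType) (N : finType).

Definition graph_ok (adj : rel N) (len : N -> N -> R) (d : R) : Prop :=
  0 < d /\
  forall u v, adj u v ->
    [/\ adj v u, len u v = len v u, 0 < len u v & len u v <= d].

Definition is_path (adj : rel N) (r : seq N) : Prop :=
  if r is v0 :: s then (1 <= size s)%N /\ path adj v0 s else False.

Definition simple_path (adj : rel N) (r : seq N) : Prop :=
  is_path adj r /\ uniq r.

Definition binary (x : N -> R) : Prop := forall j, x j = 0 \/ x j = 1.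
Definition in_cube (x : N -> R) : Prop := forall j, 0 <= x j <= 1.

(* Round trip W = (v_0,...,v_m,v_{m-1},...,v_0). *)
Definition round_trip (r : seq N) : seq N := r ++ behead (rev r).

(* Repeated traversability of r under binary x: some node of r has a station,
   and in the infinite periodic repetition u_0 u_1 u_2 ... of W
   (u_k = W[k mod 2m], the closing v_0 of one copy being the opening v_0 of the
   next), the distance travelled between any two consecutive visits to
   station nodes is at most d. *)
Definition traversable (len : N -> N -> R) (d : R) (x : N -> R) (r : seq N)
  : Prop :=
  if r is v0 :: _ then
    let W := round_trip r in
    let u := fun k : nat => nth v0 W (k %% (size W).-1) in
    (exists2 j, j \in r & x j = 1) /\
    forall k k' : nat, (k < k')%N -> x (u k) = 1 -> x (u k') = 1 ->
      (forall t : nat, (k < t < k')%N -> x (u t) <> 1) ->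
      \sum_(k <= t < k') len (u t) (u t.+1) <= d
  else False.

Definition inC (Rq : seq (seq N)) (Dq : seq N -> {set {set N}}) (S : {set N})
  : Prop :=
  exists sel : seq N -> {set N},
    (forall r, r \in Rq -> sel r \in Dq r) /\ S = \bigcup_(r <- Rq) sel r.

(* v^disagg_q(x) (a maximum; written as the supremum of the feasible values) *)
Definition v_disagg (fq : R) (Rq : seq (seq N)) (Dq : seq N -> {set {set N}})
  (x : N -> R) : R :=
  sup [set v | exists z : seq N -> R,
        [/\ forall r, r \in Rq -> 0 <= z r <= 1,
            \sum_(r <- Rq) z r <= 1,
            forall r S, r \in Rq -> S \in Dq r -> z r <= \sum_(j in S) x j
          & v = \sum_(r <- Rq) fq * z r]].

Definition v_agg (fq : R) (Rq : seq (seq N)) (Dq : seq N -> {set {set N}})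
  (x : N -> R) : R :=
  sup [set v | exists y : R,
        [/\ 0 <= y <= 1,
            forall S, inC Rq Dq S -> y <= \sum_(j in S) x j
          & v = fq * y]].

Definition concave_on_cube (g : (N -> R) -> R) : Prop :=
  forall x y (t : R), in_cube x -> in_cube y -> 0 <= t <= 1 ->
    t * g x + (1 - t) * g y <= g (fun j => t * x j + (1 - t) * y j).

Definition v_tight (fq : R) (Rq : seq (seq N)) (Dq : seq N -> {set {set N}})
  (x : N -> R) : R :=
  inf [set v | exists g : (N -> R) -> R,
        [/\ concave_on_cube g,
            forall x', binary x' -> g x' = v_agg fq Rq Dq x'
          & v = g x]].

End Defs.

(* Main.v *)
Require Import Defs.
From HB Require Import structures.
From mathcomp Require Import all_boot all_order all_algebra.
From mathcomp Require Import classical_sets reals boolp.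
From mathcomp Require Import zify ring lra.
Import Order.TTheory GRing.Theory Num.Theory.
Local Open Scope ring_scope.
Set Implicit Arguments. Unset Strict Implicit. Unset Printing Implicit Defensive.

Section Shift.
Variable R : realType.
Implicit Types a b e k : R.

Definition isI (a : R) := a \is a Num.int.

Lemma int_le_floor (a z : R) : isI z -> z <= a -> z <= (Num.floor a)%:~R.
Proof. by move=> /intrP[m ->] H; rewrite ler_int floor_ge_int. Qed.

Lemma ceil_le_intR (a z : R) : isI z -> a <= z -> (Num.ceil a)%:~R <= z.
Proof. by move=> /intrP[m ->] H; rewrite ler_int ceil_le_int. Qed.

Lemma shift_down a b e k : isI k -> 0 <= e ->
  (~~ isI a -> e <= a - (Num.floor a)%:~R) ->
  (~~ isI b -> e <= b - (Num.floor b)%:~R) -> k <= a - b ->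
  k <= (a - (if isI a then 0 else e)) - (b - (if isI b then 0 else e)).
Proof.
move=> hk he ea eb hab.
case: (boolP (isI a)) => ha; case: (boolP (isI b)) => hb; rewrite ?subr0.
- by [].
- lra.
- have hz : isI (k + b) by rewrite /isI rpredD.
  have := int_le_floor hz (_ : k + b <= a); have := ea ha; lra.
- lra.
Qed.

Lemma shift_up a b e k : isI k -> 0 <= e ->
  (~~ isI a -> e <= (Num.ceil a)%:~R - a) ->
  (~~ isI b -> e <= (Num.ceil b)%:~R - b) -> k <= a - b ->
  k <= (a + (if isI a then 0 else e)) - (b + (if isI b then 0 else e)).
Proof.
move=> hk he ea eb hab.
case: (boolP (isI a)) => ha; case: (boolP (isI b)) => hb; rewrite ?addr0.
- by [].
- have hz : isI (a - k) by rewrite /isI rpredB.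
  have := ceil_le_intR hz (_ : b <= a - k); have := eb hb; lra.
- lra.
- lra.
Qed.
End Shift.

Section Pos.
Variables (R : realType) (N : finType) (s : seq N) (j0 : N).
Hypotheses (s_uniq : uniq s) (s_all : forall j, j \in s).

Definition cum (x : N -> R) (i : nat) : R := \sum_(0 <= k < i) x (nth j0 s k).

Lemma sum_pos (x : N -> R) a b : (b <= size s)%N ->
  \sum_(j | (a <= index j s < b)%N) x j = \sum_(a <= k < b) x (nth j0 s k).
Proof.
move=> hb.
have hp : perm_eq (index_enum N) s.
  by apply: uniq_perm; rewrite ?index_enum_uniq // => j; rewrite mem_index_enum s_all.
rewrite (perm_big _ hp) (big_nth j0).
rewrite (@big_nat_widenl _ _ _ a 0) // (@big_nat_widen _ _ _ 0 b (size s)) //.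
rewrite big_nat_cond [in RHS]big_nat_cond.
apply: eq_big => k; last by [].
case hk: (0 <= k < size s)%N => //=.
by rewrite index_uniq //; case/andP: hk.
Qed.

Lemma cum_diff (x : N -> R) a b : (a <= b)%N -> cum x b - cum x a = \sum_(a <= k < b) x (nth j0 s k).
Proof. by move=> hab; rewrite /cum (@big_cat_nat _ _ _ a 0 b) //= addrC addrK. Qed.

Definition inK (F : nat -> nat -> Prop) (x : N -> R) :=
  in_cube x /\ forall a b, F a b -> (a <= b <= size s)%N -> 1 <= cum x b - cum x a.

Definition mu (x : N -> R) := #|[set i : 'I_(size s).+1 | ~~ isI (cum x i)]|.

Lemma cum0 x : cum x 0 = 0. Proof. by rewrite /cum big_geq. Qed.

Lemma x_cum x j : x j = cum x (index j s).+1 - cum x (index j s).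
Proof. by rewrite /cum big_nat_recr //= addrC addrK nth_index. Qed.

Lemma cum_tele (c : nat -> R) i : (i <= size s)%N -> c 0 = 0 ->
  cum (fun j => c (index j s).+1 - c (index j s)) i = c i.
Proof.
move=> hi c0; rewrite /cum.
rewrite (eq_big_nat _ _ (F2 := fun k => c k.+1 - c k)).
  by rewrite telescope_sumr // c0 subr0.
by move=> k /andP[_ hk]; rewrite index_uniq //; exact: leq_trans hk hi.
Qed.

Lemma idx_lt j : (index j s < size s)%N.
Proof. by rewrite index_mem s_all. Qed.

Lemma test (m : int) : (m%:~R : R) <= 1 -> (m <= 1)%R.
Proof. by rewrite -(ler_int R m 1). Qed.

Lemma step F x : inK F x -> binary x \/
  exists x1 x2 (t : R), [/\ inK F x1, inK F x2, 0 <= t <= 1,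
     x = (fun j => t * x1 j + (1 - t) * x2 j) & (mu x1 < mu x)%N /\ (mu x2 < mu x)%N].
Proof.
move=> [hc hF].
set A := [set i : 'I_(size s).+1 | ~~ isI (cum x i)].
case: (set_0Vmem A) => [A0 | [i1 i1A]].
  left => j.
  have hint : forall i, (i <= size s)%N -> isI (cum x i).
    move=> i hi; apply/negPn/negP => hni.
    have : (Ordinal (hi : (i < (size s).+1)%N)) \in A by rewrite inE.
    by rewrite A0 inE.
  have hx : isI (x j).
    by rewrite x_cum; apply: rpredB; apply: hint; [exact: idx_lt | exact: ltnW (idx_lt j)].
  case/intrP: hx => m hm; have := hc j; rewrite hm => /andP[h0 h1].
  rewrite ler0z in h0; have {}h1 : (m <= 1)%R by rewrite -(ler_int R m 1).
  have : (m = 0 \/ m = 1)%R by lia.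
  by case=> ->; [left | right].
right.
pose fr (i : 'I_(size s).+1) := cum x i - (Num.floor (cum x i))%:~R.
pose cf (i : 'I_(size s).+1) := (Num.ceil (cum x i))%:~R - cum x i.
case: (@arg_minP _ R _ i1 [pred i | i \in A] fr i1A) => ism isA hmins.
case: (@arg_minP _ R _ i1 [pred i | i \in A] cf i1A) => idm idA hmind.
set s0 := fr ism; set d0 := cf idm.
have frpos : forall i : 'I_(size s).+1, i \in A -> 0 < fr i.
  move=> i; rewrite inE /fr => hi; rewrite subr_gt0 lt_neqAle floor_le andbT.
  by apply: contraNneq hi => <-; rewrite /isI intr_int.
have cfpos : forall i : 'I_(size s).+1, i \in A -> 0 < cf i.
  move=> i; rewrite inE /cf => hi; rewrite subr_gt0 lt_neqAle ceil_ge andbT.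
  by apply: contraNneq hi => ->; rewrite /isI intr_int.
have s0pos : 0 < s0 by exact: frpos.
have d0pos : 0 < d0 by exact: cfpos.
pose cd i := cum x i - (if isI (cum x i) then 0 else s0).
pose cu i := cum x i + (if isI (cum x i) then 0 else d0).
pose x1 j := cd (index j s).+1 - cd (index j s).
pose x2 j := cu (index j s).+1 - cu (index j s).
have cd0 : cd 0%N = 0 by rewrite /cd cum0 /isI int_num0 subr0.
have cu0 : cu 0%N = 0 by rewrite /cu cum0 /isI int_num0 addr0.
have c1 : forall i, (i <= size s)%N -> cum x1 i = cd i by move=> i hi; exact: cum_tele.
have c2 : forall i, (i <= size s)%N -> cum x2 i = cu i by move=> i hi; exact: cum_tele.
have hs : forall i, (i <= size s)%N -> ~~ isI (cum x i) -> s0 <= cum x i - (Num.floor (cum x i))%:~R.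
  move=> i hi hni; have := hmins (Ordinal (hi : (i < (size s).+1)%N)).
  by rewrite /= inE => /(_ hni).
have hd : forall i, (i <= size s)%N -> ~~ isI (cum x i) -> d0 <= (Num.ceil (cum x i))%:~R - cum x i.
  move=> i hi hni; have := hmind (Ordinal (hi : (i < (size s).+1)%N)).
  by rewrite /= inE => /(_ hni).
have Kd : forall i i' (k : R), isI k -> (i <= size s)%N -> (i' <= size s)%N ->
    k <= cum x i - cum x i' -> k <= cd i - cd i'.
  move=> i i' k hk hi hi' h; apply: shift_down => //; [exact: ltW | exact: hs | exact: hs].
have Ku : forall i i' (k : R), isI k -> (i <= size s)%N -> (i' <= size s)%N ->
    k <= cum x i - cum x i' -> k <= cu i - cu i'.
  move=> i i' k hk hi hi' h; apply: shift_up => //; [exact: ltW | exact: hd | exact: hd].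
have hxj : forall j, 0 <= cum x (index j s).+1 - cum x (index j s) <= 1.
  by move=> j; rewrite -x_cum; exact: hc.
have hpj : forall j, (index j s <= size s)%N /\ ((index j s).+1 <= size s)%N.
  by move=> j; split; [exact: ltnW (idx_lt j) | exact: idx_lt].
have int0 : isI (0 : R) by exact: int_num0.
have int1 : isI (1 : R) by exact: int_num1.
have intm1 : isI (-1 : R) by rewrite /isI rpredN.
exists x1, x2, (d0 / (s0 + d0)); split.
- split.
    move=> j; case: (hpj j) => h1 h2; case/andP: (hxj j) => l u.
    have := Kd _ _ _ int0 h2 h1 l.
    have := Kd _ _ _ intm1 h1 h2 (_ : -1 <= cum x (index j s) - cum x (index j s).+1).
    by rewrite /x1; lra.
  move=> a b hab hle; case/andP: (hle) => hab' hb.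
  rewrite !c1 //; last exact: leq_trans hab' hb.
  by apply: Kd => //; [exact: leq_trans hab' hb | exact: hF].
- split.
    move=> j; case: (hpj j) => h1 h2; case/andP: (hxj j) => l u.
    have := Ku _ _ _ int0 h2 h1 l.
    have := Ku _ _ _ intm1 h1 h2 (_ : -1 <= cum x (index j s) - cum x (index j s).+1).
    by rewrite /x2; lra.
  move=> a b hab hle; case/andP: (hle) => hab' hb.
  rewrite !c2 //; last exact: leq_trans hab' hb.
  by apply: Ku => //; [exact: leq_trans hab' hb | exact: hF].
- apply/andP; split.
    by apply: divr_ge0; [exact: ltW | apply: addr_ge0; exact: ltW].
  rewrite ler_pdivrMr; [lra | exact: addr_gt0].
- have hsd : s0 + d0 != 0 by rewrite gt_eqF // addr_gt0.
  have hi : forall i, d0 / (s0 + d0) * cd i + (1 - d0 / (s0 + d0)) * cu i = cum x i.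
    move=> i; rewrite /cd /cu; case: ifP => _; first by field.
    by field.
  apply/boolp.funext => j; rewrite /x1 /x2 x_cum.
  rewrite -[cum x (index j s).+1]hi -[cum x (index j s)]hi; ring.
- split; apply: proper_card; apply/properP; split.
  + apply/fintype.subsetP => i; rewrite !inE c1 ?(ltnSE (ltn_ord i)) //.
    by apply: contra => hi; rewrite /cd hi subr0.
  + exists ism => //; rewrite inE c1 ?(ltnSE (ltn_ord ism)) // negbK /cd.
    move: isA; rewrite !inE => hn; rewrite (negbTE hn); rewrite /s0 /fr opprB addrC subrK.
    exact: intr_int.
  + apply/fintype.subsetP => i; rewrite !inE c2 ?(ltnSE (ltn_ord i)) //.
    by apply: contra => hi; rewrite /cu hi addr0.
  + exists idm => //; rewrite inE c2 ?(ltnSE (ltn_ord idm)) // negbK /cu.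
    move: idA; rewrite !inE => hn; rewrite (negbTE hn); rewrite /d0 /cf addrC subrK.
    exact: intr_int.
Qed.

Lemma decomp F (g : (N -> R) -> R) L : concave_on_cube g ->
  (forall x, binary x -> inK F x -> L <= g x) -> forall x, inK F x -> L <= g x.
Proof.
move=> gc hb x; move: {2}(mu x) (leqnn (mu x)) => m.
elim: m x => [|m IH] x hm hx.
  case: (step hx) => [bx | [x1 [x2 [t [_ _ _ _ [h1 _]]]]]]; first exact: hb.
  by move: hm; rewrite leqn0 => /eqP hm; rewrite hm in h1.
case: (step hx) => [bx | [x1 [x2 [t [k1 k2 ht ex [h1 h2]]]]]]; first exact: hb.
have g1 : L <= g x1 by apply: IH k1; rewrite -ltnS; exact: leq_trans h1 hm.
have g2 : L <= g x2 by apply: IH k2; rewrite -ltnS; exact: leq_trans h2 hm.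
have := gc x1 x2 t k1.1 k2.1 ht; rewrite -ex => hg.
case/andP: ht => t0 t1.
have : t * L + (1 - t) * L <= t * g x1 + (1 - t) * g x2.
  by apply: lerD; apply: ler_wpM2l => //; rewrite subr_ge0.
have -> : t * L + (1 - t) * L = L by ring.
move=> h; exact: le_trans h hg.
Qed.
End Pos.

Section Agg.
Variables (R : realType) (N : finType).
Local Open Scope classical_set_scope.
Implicit Types (x : N -> R) (Rq : seq (seq N)) (Dq : seq N -> {set {set N}}).

Lemma sup_max (E : set R) e : E e -> (forall e', E e' -> e' <= e) -> sup E = e.
Proof.
move=> Ee H; apply/le_anti/andP; split.
  by apply: ge_sup; [exists e | exact: H].
by apply: sup_upper_bound => //; split; [exists e | exists e].
Qed.

Lemma inf_le_elem (E : set R) e lb : E e -> (forall e', E e' -> lb <= e') -> inf E <= e.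
Proof. by move=> Ee H; apply: ge_inf => //; exists lb. Qed.

Definition agg_ok Rq Dq x (ys : R) :=
  [/\ 0 <= ys <= 1, forall S, inC Rq Dq S -> ys <= \sum_(j in S) x j
    & forall y, 0 <= y <= 1 -> (forall S, inC Rq Dq S -> y <= \sum_(j in S) x j) -> y <= ys].

Definition nonneg x := forall j, 0 <= x j.

Lemma cube_nonneg x : in_cube x -> nonneg x.
Proof. by move=> h j; case/andP: (h j). Qed.

Lemma binary_cube x : binary x -> in_cube x.
Proof. by move=> h j; case: (h j) => ->; rewrite ?lexx ?ler01. Qed.

Lemma agg_exists Rq Dq x : nonneg x -> exists ys, agg_ok Rq Dq x ys.
Proof.
move=> hx.
pose Y := [set y : R | 0 <= y <= 1 /\ forall S, inC Rq Dq S -> y <= \sum_(j in S) x j].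
have Y0 : Y 0 by split; [rewrite lexx ler01 | move=> S _; exact: sumr_ge0].
have hY : has_sup Y by split; [exists 0 | exists 1 => y [/andP[]]].
exists (sup Y); split.
- apply/andP; split; first exact: sup_upper_bound.
  by apply: ge_sup; [exists 0 | move=> y [/andP[]]].
- move=> S hS; apply: ge_sup; first by exists 0.
  by move=> y [_ h]; exact: h.
- by move=> y h1 h2; apply: sup_upper_bound.
Qed.

Lemma v_agg_val (fq : R) Rq Dq x ys : 0 <= fq -> agg_ok Rq Dq x ys -> v_agg fq Rq Dq x = fq * ys.
Proof.
move=> hf [h1 h2 h3]; apply: sup_max; first by exists ys.
by move=> e [y [hy hS ->]]; apply: ler_wpM2l => //; exact: h3.
Qed.

Lemma agg_unique Rq Dq x y1 y2 : agg_ok Rq Dq x y1 -> agg_ok Rq Dq x y2 -> y1 = y2.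
Proof.
move=> [a1 b1 c1] [a2 b2 c2]; apply/le_anti/andP; split; [exact: c2 | exact: c1].
Qed.

Lemma v_agg_ge0 (fq : R) Rq Dq x : 0 <= fq -> nonneg x -> 0 <= v_agg fq Rq Dq x.
Proof.
move=> hf hx; case: (agg_exists Rq Dq hx) => ys hys.
rewrite (v_agg_val hf hys); apply: mulr_ge0 => //; by case: hys => /andP[].
Qed.

Lemma sumS_mix (S : {set N}) x y (t : R) :
  \sum_(j in S) (t * x j + (1 - t) * y j) = t * \sum_(j in S) x j + (1 - t) * \sum_(j in S) y j.
Proof. by rewrite big_split /= !mulr_sumr. Qed.

Lemma v_agg_concave (fq : R) Rq Dq : 0 <= fq -> concave_on_cube (v_agg fq Rq Dq).
Proof.
move=> hf x y t hx hy /andP[t0 t1].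
have hm : nonneg (fun j => t * x j + (1 - t) * y j).
  move=> j; apply: addr_ge0; apply: mulr_ge0; rewrite ?subr_ge0 //;
    exact: cube_nonneg.
case: (agg_exists Rq Dq (cube_nonneg hx)) => yx hyx.
case: (agg_exists Rq Dq (cube_nonneg hy)) => yy hyy.
case: (agg_exists Rq Dq hm) => ym hym.
rewrite (v_agg_val hf hyx) (v_agg_val hf hyy) (v_agg_val hf hym).
have : t * yx + (1 - t) * yy <= ym.
  case: hym => _ _; apply.
    case: hyx => /andP[a1 b1] _ _; case: hyy => /andP[a2 b2] _ _.
    apply/andP; split; first by apply: addr_ge0; apply: mulr_ge0; rewrite ?subr_ge0.
    have : t * yx + (1 - t) * yy <= t * 1 + (1 - t) * 1.
      by apply: lerD; apply: ler_wpM2l; rewrite ?subr_ge0.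
    by rewrite !mulr1 subrKC.
  move=> S hS; rewrite sumS_mix.
  case: hyx => _ h1 _; case: hyy => _ h2 _.
  by apply: lerD; apply: ler_wpM2l; rewrite ?subr_ge0 ?h1 ?h2.
move=> h.
have -> : t * (fq * yx) + (1 - t) * (fq * yy) = fq * (t * yx + (1 - t) * yy) by ring.
by apply: ler_wpM2l.
Qed.


Lemma term_le_sum x (S : {set N}) j : nonneg x -> j \in S -> x j <= \sum_(i in S) x i.
Proof. by move=> hx hj; rewrite (bigD1 j) //= lerDl sumr_ge0. Qed.

Lemma sum_sub x (S : {set N}) (P : pred N) : nonneg x -> (forall j, j \in S -> P j) ->
  \sum_(j in S) x j <= \sum_(j | P j) x j.
Proof.
move=> hx hSP; rewrite [X in X <= _]big_mkcond [X in _ <= X]big_mkcond /=.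
apply: ler_sum => j _; case: (boolP (j \in S)) => hj; first by rewrite hSP.
by case: (P j).
Qed.

Lemma sum_setU x (A B : {set N}) : nonneg x ->
  \sum_(j in A :|: B) x j <= \sum_(j in A) x j + \sum_(j in B) x j.
Proof.
move=> hx; rewrite [X in X <= _]big_mkcond [\sum_(j in A) _]big_mkcond.
rewrite [\sum_(j in B) _]big_mkcond -big_split /=.
apply: ler_sum => j _; rewrite inE; have := hx j.
by case: (j \in A); case: (j \in B) => /= h; lra.
Qed.

Lemma sum_bigcup x (l : seq (seq N)) (sel : seq N -> {set N}) : nonneg x ->
  \sum_(j in \bigcup_(r <- l) sel r) x j <= \sum_(r <- l) \sum_(j in sel r) x j.
Proof.
move=> hx; elim: l => [|r l IH]; first by rewrite !big_nil big_set0.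
rewrite !big_cons; apply: le_trans (sum_setU _ _ hx) _.
by apply: lerD.
Qed.

Lemma tight_nonneg (fq : R) Rq Dq (g : (N -> R) -> R) x : 0 <= fq -> concave_on_cube g ->
  (forall x', binary x' -> g x' = v_agg fq Rq Dq x') -> in_cube x -> 0 <= g x.
Proof.
move=> hf gc hg hx.
case: (pselect (exists j : N, True)) => [[j0 _] | nE]; last first.
  have bx : binary x by move=> j; exfalso; apply: nE; exists j.
  rewrite hg //; apply: v_agg_ge0 => //; exact/cube_nonneg/binary_cube.
have sa : forall j : N, j \in enum N by move=> j; rewrite mem_enum.
apply: (@decomp R N (enum N) j0 (enum_uniq _) sa (fun _ _ => False) g 0 gc).
  move=> b bb _; rewrite hg //; apply: v_agg_ge0 => //; exact/cube_nonneg/binary_cube.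
by split => // a b [].
Qed.


Lemma agg_le_disagg (fq : R) Rq Dq x : 0 <= fq -> uniq Rq -> in_cube x ->
  v_agg fq Rq Dq x <= v_disagg fq Rq Dq x.
Proof.
move=> hf hu hx; have hn := cube_nonneg hx.
case: (agg_exists Rq Dq hn) => ys hys; rewrite (v_agg_val hf hys).
case: hys => /andP[ys0 ys1] hyS _.
suff [z [hz1 hz2 hz3 hz4]] : exists z : seq N -> R,
    [/\ forall r, r \in Rq -> 0 <= z r <= 1, \sum_(r <- Rq) z r <= 1,
        forall r S, r \in Rq -> S \in Dq r -> z r <= \sum_(j in S) x j
      & ys <= \sum_(r <- Rq) z r].
  apply: (@le_trans _ _ (\sum_(r <- Rq) fq * z r)).
    by rewrite -mulr_sumr; apply: ler_wpM2l.
  apply: sup_upper_bound; last by exists z.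
  split; first by exists (\sum_(r <- Rq) fq * z r); exists z.
  exists fq => v [z' [_ h2 _ ->]]; rewrite -mulr_sumr -[X in _ <= X]mulr1.
  exact: ler_wpM2l.
pose xs (S : {set N}) := \sum_(j in S) x j.
case: (pselect (exists2 r0, r0 \in Rq & forall S, S \in Dq r0 -> 1 <= xs S))
  => [[r0 r0in h0] | hno].
  have hs1 : \sum_(r <- Rq) (if r == r0 then 1 else 0) = 1 :> R.
    rewrite (bigD1_seq _ r0in hu) /= eqxx big1 ?addr0 //.
    by move=> i hi; rewrite (negbTE hi).
  exists (fun r => if r == r0 then 1 else 0); split.
  - by move=> r _; case: (r == r0); rewrite ?lexx ?ler01.
  - by rewrite hs1.
  - move=> r S _ hS /=; case: ifP => [/eqP e | _]; last exact: sumr_ge0.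
    by apply: h0; rewrite -e.
  - by rewrite hs1.
pose P (r : seq N) (T : {set N}) := (T \in Dq r) && [forall S' in Dq r, xs T <= xs S'].
pose sel (r : seq N) := if [pick T | P r T] is Some T then T else @finset.set0 N.
have hsel : forall r, r \in Rq -> [/\ sel r \in Dq r, xs (sel r) < 1 &
    forall S', S' \in Dq r -> xs (sel r) <= xs S'].
  move=> r hr.
  have [S1 S1in S1lt] : exists2 S1, S1 \in Dq r & xs S1 < 1.
    case: (pselect (exists2 S1, S1 \in Dq r & xs S1 < 1)) => // hn1.
    exfalso; apply: hno; exists r => // S hS; rewrite leNgt; apply/negP => hlt.
    by apply: hn1; exists S.
  case: (@arg_minP _ R _ S1 [pred S | S \in Dq r] xs S1in) => Sm Smin hmin.
  rewrite /sel; case: pickP => [S /andP[hS /forall_inP hm] | hnone].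
    split => //; first by apply: le_lt_trans (hm _ S1in) S1lt.
  exfalso; move: (hnone Sm); rewrite /P.
  have -> : Sm \in Dq r by exact: Smin.
  by move/negP; apply; apply/forall_inP => S' hS'; exact: hmin.
pose M := \sum_(r <- Rq) xs (sel r).
pose mx := Num.max 1 M.
have mx1 : 1 <= mx by rewrite le_max lexx.
have mx0 : 0 < mx by apply: lt_le_trans mx1; exact: ltr01.
have xs0 : forall S, 0 <= xs S by move=> S; exact: sumr_ge0.
have zle : forall r, xs (sel r) / mx <= xs (sel r).
  move=> r; rewrite ler_pdivrMr //; rewrite -{1}[xs (sel r)]mulr1.
  by apply: ler_wpM2l.
exists (fun r => xs (sel r) / mx); split.
- move=> r hr; case: (hsel r hr) => _ hlt _; apply/andP; split.
    by apply: divr_ge0 => //; exact: ltW.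
  by apply: le_trans (zle r) _; exact: ltW.
- by rewrite -mulr_suml ler_pdivrMr // mul1r le_max lexx orbT.
- move=> r S hr hS; apply: le_trans (zle r) _.
  by case: (hsel r hr) => _ _; apply.
- rewrite -mulr_suml -/M.
  have hU : ys <= M.
    apply: le_trans (hyS (\bigcup_(r <- Rq) sel r) _) _.
      by exists sel; split => // r hr; case: (hsel r hr).
    exact: sum_bigcup.
  have [hM | hM] : M <= 1 \/ 1 < M by case: leP; [left | right].
    by rewrite /mx (max_l hM) divr1.
  have hM0 : M != 0 by rewrite gt_eqF // (lt_trans ltr01 hM).
  by rewrite /mx (max_r (ltW hM)) divff.
Qed.

Lemma inC1 r Dq (S : {set N}) : inC [:: r] Dq S <-> S \in Dq r.
Proof.
split.
  move=> [sel [h1 ->]].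
  have -> : \big[@finset.setU N/@finset.set0 N]_(r' <- [:: r]) sel r' = sel r.
    by rewrite big_cons big_nil finset.setU0.
  by apply: h1; rewrite mem_seq1.
move=> hS; exists (fun _ => S); split; first by move=> r'; rewrite mem_seq1 => /eqP ->.
by rewrite big_cons big_nil finset.setU0.
Qed.

Lemma disagg_le_agg1 (fq : R) r Dq x : 0 <= fq -> in_cube x ->
  v_disagg fq [:: r] Dq x <= v_agg fq [:: r] Dq x.
Proof.
move=> hf hx; have hn := cube_nonneg hx.
case: (agg_exists [:: r] Dq hn) => ys hys; rewrite (v_agg_val hf hys).
apply: ge_sup.
  exists (\sum_(r' <- [:: r]) fq * 0); exists (fun _ => 0); split => //.
  - by move=> r' _; rewrite lexx ler01.
  - by rewrite big_seq1 ler01.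
  - by move=> r' S _ _; exact: sumr_ge0.
move=> v [z [h1 h2 h3 ->]]; rewrite big_seq1; apply: ler_wpM2l => //.
case: hys => _ _; apply; first by apply: h1; rewrite mem_seq1.
by move=> S /inC1 hS; apply: h3 => //; rewrite mem_seq1.
Qed.

End Agg.

Lemma walk_image (p : nat -> nat) (B : nat) : (forall t, (p t < B)%N) ->
  (forall t, (p t.+1 <= (p t).+1)%N /\ (p t <= (p t.+1).+1)%N) ->
  forall k k', exists a b, (a <= b <= B)%N /\
    forall i, (a <= i < b)%N <-> exists t, (k < t < k')%N /\ p t = i.
Proof.
move=> hB hs k k'; elim: k' => [|k' [a [b [hab hi]]]].
  exists 0%N, 0%N; split => // i; split; first by move=> /andP[_]; rewrite ltn0.
  by move=> [t [/andP[_]]]; rewrite ltn0.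
case: (ltnP k k') => hk; last first.
  exists 0%N, 0%N; split => // i; split; first by move=> /andP[_]; rewrite ltn0.
  by move=> [t [/andP[h1 h2] _]]; lia.
case: (eqVneq k' k.+1) => ek.
  exists (p k'), (p k').+1; split; first by have := hB k'; lia.
  move=> i; split.
    move=> hi'; exists k'; split; first by lia.
    by lia.
  move=> [t [/andP[h1 h2] <-]]; have et : t = k' by lia.
  by rewrite et leqnn ltnSn.
have [t0 [ht0 pt0]] : exists t, (k < t < k')%N /\ p t = p k'.-1.
  by exists k'.-1; split => //; lia.
have hin : (a <= p k'.-1 < b)%N by apply/hi; exists t0.
have := hs k'.-1; have -> : k'.-1.+1 = k' by lia.
move=> [s1 s2].
exists (minn a (p k')), (maxn b (p k').+1); split; first by have := hB k'; lia.
move=> i; split.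
  move=> hi'.
  case: (eqVneq i (p k')) => ei; first by exists k'; split => //; lia.
  have : (a <= i < b)%N by lia.
  by move/hi => [t [ht pt]]; exists t; split => //; lia.
move=> [t [ht pt]].
case: (eqVneq t k') => et; first by rewrite -pt et; lia.
have : (a <= i < b)%N by apply/hi; exists t; split => //; lia.
lia.
Qed.

Section Path.
Variables (R : realType) (N : finType) (len : N -> N -> R) (d : R) (v0 : N) (rest : seq N).
Hypotheses (huniq : uniq (v0 :: rest)) (hm : (1 <= size rest)%N).

Definition sP := (v0 :: rest) ++ [seq j <- enum N | j \notin (v0 :: rest)].

Lemma sP_uniq : uniq sP.
Proof.
rewrite cat_uniq huniq filter_uniq ?enum_uniq // andbT /=.
apply/hasPn => j; rewrite mem_filter => /andP[h _]; exact: h.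
Qed.

Lemma sP_all j : j \in sP.
Proof. by rewrite mem_cat mem_filter mem_enum andbT orbN. Qed.

Definition Wt := round_trip (v0 :: rest).
Definition uu (k : nat) := nth v0 Wt (k %% (size Wt).-1).

Lemma travP x : traversable len d x (v0 :: rest) <->
  (exists2 j, j \in v0 :: rest & x j = 1) /\
  (forall k k', (k < k')%N -> x (uu k) = 1 -> x (uu k') = 1 ->
     (forall t, (k < t < k')%N -> x (uu t) <> 1) ->
     \sum_(k <= t < k') len (uu t) (uu t.+1) <= d).
Proof. by []. Qed.

Let m := size rest.
Definition tri (i : nat) := if (i <= m)%N then i else (m + m - i)%N.

Lemma sizeW : (size Wt).-1 = (m + m)%N.
Proof. by rewrite /Wt /round_trip size_cat size_behead size_rev /= /m; lia. Qed.

Lemma tri_le i : (i <= m + m)%N -> (tri i <= m)%N.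
Proof. by rewrite /tri; case: ifP => h; lia. Qed.

Lemma nthW i : (i <= m + m)%N -> nth v0 Wt i = nth v0 (v0 :: rest) (tri i).
Proof.
move=> hi; rewrite /Wt /round_trip nth_cat /tri /=.
case: ifP => h1; case: ifP => h2 //; try lia.
rewrite nth_behead nth_rev /=; last by rewrite /m in h1 hi *; lia.
by congr nth; rewrite /m in h1 hi *; lia.
Qed.

Lemma idx_r i : (i <= m)%N -> index (nth v0 (v0 :: rest) i) sP = i.
Proof.
move=> hi; rewrite /sP index_cat mem_nth ?index_uniq //= ltnS.
Qed.

Lemma M0 : (0 < m + m)%N. Proof. by rewrite /m; lia. Qed.

Lemma uu_eq k : uu k = nth v0 (v0 :: rest) (tri (k %% (m + m))).
Proof. by rewrite /uu sizeW nthW // ltnW // ltn_pmod // M0. Qed.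

Lemma p_eq k : index (uu k) sP = tri (k %% (m + m)).
Proof. by rewrite uu_eq idx_r // tri_le // ltnW // ltn_pmod // M0. Qed.

Lemma uu_in k : uu k \in v0 :: rest.
Proof.
rewrite uu_eq mem_nth //=; rewrite ltnS; apply: tri_le; apply: ltnW; exact: ltn_pmod M0.
Qed.

Lemma p_step k : (tri (k.+1 %% (m + m)) <= (tri (k %% (m + m))).+1)%N /\
                 (tri (k %% (m + m)) <= (tri (k.+1 %% (m + m))).+1)%N.
Proof.
have e : (k.+1 %% (m + m) = (k %% (m + m)).+1 %% (m + m))%N.
  by rewrite -addn1 -modnDml addn1.
have lt := ltn_pmod k M0.
have hm' : (0 < m)%N by exact: hm.
rewrite e; case: (eqVneq ((k %% (m + m)).+1)%N (m + m)%N) => h.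
  rewrite h modnn /tri (leq0n m); (repeat (case: ifP => ?)); lia.
rewrite modn_small; last by lia.
rewrite /tri; (repeat (case: ifP => ?)); lia.
Qed.


Lemma cum_set (x : N -> R) a b : (a <= b <= size sP)%N ->
  cum sP v0 x b - cum sP v0 x a = \sum_(j | (a <= index j sP < b)%N) x j.
Proof. by move=> /andP[hab hb]; rewrite cum_diff // (sum_pos v0 sP_uniq sP_all). Qed.

Definition ind a b : N -> R := fun j => if (a <= index j sP < b)%N then 0 else 1.
Definition Fp a b := ~ traversable len d (ind a b) (v0 :: rest).

Variable Dq : seq N -> {set {set N}}.
Hypothesis HD : forall x, binary x -> (traversable len d x (v0 :: rest) <->
  forall S, S \in Dq (v0 :: rest) -> 1 <= \sum_(j in S) x j).

Lemma ind_bin a b : binary (ind a b).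
Proof. by move=> j; rewrite /ind; case: ifP => _; [left | right]. Qed.

Lemma claimA (z : N -> R) : in_cube z -> (forall S, S \in Dq (v0 :: rest) -> 1 <= \sum_(j in S) z j) ->
  inK sP v0 Fp z.
Proof.
move=> hz hS; split => // a b hF hab; rewrite cum_set //.
have bin := ind_bin a b.
have [S Sin Slt] : exists2 S, S \in Dq (v0 :: rest) & \sum_(j in S) ind a b j < 1.
  case: (pselect (exists2 S, S \in Dq (v0 :: rest) & \sum_(j in S) ind a b j < 1)) => // hn.
  exfalso; apply: hF; apply/(HD bin) => S hS'; rewrite leNgt; apply/negP => hl.
  by apply: hn; exists S.
apply: le_trans (hS S Sin) _.
apply: (@sum_sub R N z S (fun j => (a <= index j sP < b)%N)); first exact: cube_nonneg.
move=> j hj; apply/negPn/negP => hn.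
have : ind a b j <= \sum_(i in S) ind a b i.
  by apply: term_le_sum => //; exact/cube_nonneg/binary_cube.
by rewrite /ind (negbTE hn) => h; have := le_lt_trans h Slt; rewrite ltxx.
Qed.

Lemma claimB (b : N -> R) : binary b -> inK sP v0 Fp b -> traversable len d b (v0 :: rest).
Proof.
move=> bb [hc hK]; apply/travP; split.
  case: (pselect (exists2 j, j \in v0 :: rest & b j = 1)) => // hno; exfalso.
  have h1 : Fp 0 (size (v0 :: rest)).
    move/travP => [[j jr hj] _]; move: hj; rewrite /ind /sP index_cat jr index_mem jr andbT leq0n.
    by move/eqP; rewrite eq_sym oner_eq0.
  have hle : (0 <= size (v0 :: rest) <= size sP)%N by rewrite /sP size_cat leq_addr.
  have := hK _ _ h1 hle; rewrite cum_set // big1 ?ler10 //.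
  move=> j hj; have jr : j \in v0 :: rest.
    move: hj; rewrite /sP index_cat; case: ifP => // _.
    by move=> /andP[_]; rewrite ltnNge leq_addr.
  by case: (bb j) => // h; exfalso; apply: hno; exists j.
move=> k k' hkk hk hk' hmid; rewrite leNgt; apply/negP => hgt.
pose p t := index (uu t) sP.
have hpB : forall t, (p t < size (v0 :: rest))%N.
  by move=> t; rewrite /p p_eq ltnS tri_le // ltnW // ltn_pmod // M0.
have hps : forall t, (p t.+1 <= (p t).+1)%N /\ (p t <= (p t.+1).+1)%N.
  by move=> t; rewrite /p !p_eq; exact: p_step.
case: (walk_image hpB hps k k') => a [b' [hab hi]].
have hT : forall j, (a <= index j sP < b')%N <-> exists t, (k < t < k')%N /\ uu t = j.
  move=> j; rewrite hi; split => [[t [ht pt]] | [t [ht <-]]]; exists t; split => //.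
  rewrite -(nth_index v0 (sP_all (uu t))) -(nth_index v0 (sP_all j)).
  by congr nth; exact: pt.
have hab' : (a <= b' <= size sP)%N.
  by move: hab; rewrite /sP size_cat; lia.
have hF : Fp a b'.
  move/travP => [_ HB].
  have hnotT : forall t, b (uu t) = 1 -> ind a b' (uu t) = 1.
    move=> t ht; rewrite /ind; case: ifP => // /hT [t' [ht' e]].
    by exfalso; apply: (hmid t' ht'); rewrite e.
  have := HB k k' hkk (hnotT _ hk) (hnotT _ hk').
  have hm2 : forall t, (k < t < k')%N -> ind a b' (uu t) <> 1.
    move=> t ht; rewrite /ind.
    have -> : (a <= index (uu t) sP < b')%N by apply/hT; exists t.
    by move/eqP; rewrite eq_sym oner_eq0.
  by move/(_ hm2); rewrite leNgt hgt.
have := hK _ _ hF hab'; rewrite cum_set // big1 ?ler10 //.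
move=> j /hT [t [ht <-]]; case: (bb (uu t)) => // h; exfalso; exact: hmid t ht h.
Qed.

Lemma tight_ge_path (fq : R) (g : (N -> R) -> R) (x : N -> R) : 0 <= fq -> concave_on_cube g ->
  (forall x', binary x' -> g x' = v_agg fq [:: v0 :: rest] Dq x') -> in_cube x ->
  v_agg fq [:: v0 :: rest] Dq x <= g x.
Proof.
move=> hf gc hg hx.
case: (agg_exists [:: v0 :: rest] Dq (cube_nonneg hx)) => ys hys; rewrite (v_agg_val hf hys).
case: (hys) => /andP[ys0 ys1] hyS _.
have g0 : forall w, in_cube w -> 0 <= g w by move=> w hw; exact: tight_nonneg hf gc hg hw.
case: (eqVneq ys 0) => [-> | ysn0]; first by rewrite mulr0; exact: g0.
have ysp : 0 < ys by rewrite lt_neqAle eq_sym ysn0.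
pose xh j := if x j <= ys then x j / ys else 1.
pose w j := if x j <= ys then 0 else (x j - ys) / (1 - ys).
have hxh : in_cube xh.
  move=> j; rewrite /xh; case: ifP => h; last by rewrite ler01 lexx.
  have := hx j; move=> /andP[h0 h1].
  apply/andP; split; first by apply: divr_ge0 => //; exact: ltW.
  by rewrite ler_pdivrMr // mul1r.
have hw : in_cube w.
  move=> j; rewrite /w; case: ifP => h; first by rewrite lexx ler01.
  have hlt : ys < x j by rewrite ltNge h.
  have := hx j; move=> /andP[h0 h1].
  have hp : 0 < 1 - ys by lra.
  apply/andP; split; first by apply: divr_ge0; lra.
  rewrite ler_pdivrMr // mul1r; lra.
have ex : (fun j => ys * xh j + (1 - ys) * w j) = x.
  apply/boolp.funext => j; rewrite /xh /w; case: ifP => h.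
    by rewrite mulr0 addr0 mulrC divfK.
  have hlt : ys < x j by rewrite ltNge h.
  have := hx j; move=> /andP[h0 h1].
  have hp : 1 - ys != 0 by rewrite gt_eqF //; lra.
  by rewrite mulr1 [(1 - ys) * _]mulrC divfK // addrC subrK.
have gxh : fq <= g xh.
  apply: (decomp sP_uniq sP_all (F := Fp) gc); last first.
    apply: claimA => // S hS.
    have hSy : ys <= \sum_(j in S) x j by apply: hyS; apply/inC1.
    case: (pselect (exists2 j, j \in S & ys < x j)) => [[j jS hj] | hn].
      have e1 : xh j = 1 by rewrite /xh leNgt hj.
      rewrite -e1; apply: term_le_sum => //; exact: cube_nonneg.
    have -> : \sum_(j in S) xh j = \sum_(j in S) x j / ys.
      apply: eq_bigr => j jS; rewrite /xh; case: ifP => // h.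
      by exfalso; apply: hn; exists j => //; rewrite ltNge h.
    by rewrite -mulr_suml ler_pdivlMr // mul1r.
  move=> b bb hK; rewrite hg //.
  have tb := claimB bb hK.
  have hb1 := (HD bb).1 tb.
  case: (agg_exists [:: v0 :: rest] Dq (cube_nonneg (binary_cube bb))) => yb hyb.
  rewrite (v_agg_val hf hyb).
  have : 1 <= yb.
    case: hyb => _ _; apply; first by rewrite lexx ler01.
    by move=> S /inC1; exact: hb1.
  by move=> h; rewrite -{1}[fq]mulr1; exact: ler_wpM2l.
have := gc xh w ys hxh hw; rewrite ys0 ys1 ex => /(_ isT) hc.
apply: le_trans hc.
have h1 : ys * fq <= ys * g xh by apply: ler_wpM2l => //; exact: ltW.
have h2 : 0 <= (1 - ys) * g w by apply: mulr_ge0; [lra | exact: g0].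
rewrite mulrC; lra.
Qed.

End Path.

Unset Implicit Arguments.
Set Strict Implicit.

Theorem proposition3 (R : realType) (N : finType)
  (adj : rel N) (len : N -> N -> R) (d : R)
  (Q : finType) (f : Q -> R) (Rq : Q -> seq (seq N))
  (D : Q -> seq N -> {set {set N}}) :
  graph_ok adj len d ->
  (forall q, 0 <= f q) ->
  (forall q, Rq q != [::] /\ uniq (Rq q)) ->
  (forall q r, r \in Rq q -> is_path adj r) ->
  (forall q r, r \in Rq q -> forall x : N -> R, binary x ->
      (traversable len d x r <->
       forall S, S \in D q r -> 1 <= \sum_(j in S) x j)) ->
  forall (q : Q) (x : N -> R), in_cube x ->
  [/\ v_tight (f q) (Rq q) (D q) x <= v_agg (f q) (Rq q) (D q) x
        /\ v_agg (f q) (Rq q) (D q) x <= v_disagg (f q) (Rq q) (D q) x,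
      (forall r, Rq q = [:: r] ->
         v_agg (f q) (Rq q) (D q) x = v_disagg (f q) (Rq q) (D q) x)
    & (forall r, Rq q = [:: r] -> simple_path adj r ->
         v_tight (f q) (Rq q) (D q) x = v_agg (f q) (Rq q) (D q) x
         /\ v_agg (f q) (Rq q) (D q) x = v_disagg (f q) (Rq q) (D q) x)].
Proof.
move=> hg hf hR hpath hD q x hx.
have [hne hu] := hR q.
have i1 : v_agg (f q) (Rq q) (D q) x <= v_disagg (f q) (Rq q) (D q) x by exact: agg_le_disagg (hf q) hu hx.
have i0 : v_tight (f q) (Rq q) (D q) x <= v_agg (f q) (Rq q) (D q) x.
  rewrite /v_tight; apply: (@inf_le_elem R _ _ 0).
    by exists (v_agg (f q) (Rq q) (D q)); split => //; exact: v_agg_concave (hf q).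
  by move=> e [g [gc hgb ->]]; exact: tight_nonneg (hf q) gc hgb hx.
have e1 : forall r, Rq q = [:: r] ->
    v_agg (f q) (Rq q) (D q) x = v_disagg (f q) (Rq q) (D q) x.
  move=> r hr; apply/le_anti/andP; split => //.
  by rewrite hr; exact: disagg_le_agg1 (hf q) hx.
split => //.
move=> r hr [hp hun]; split; last exact: e1 hr.
apply/le_anti/andP; split => //.
rewrite /v_tight; apply: lb_le_inf.
  by exists (v_agg (f q) (Rq q) (D q) x); exists (v_agg (f q) (Rq q) (D q));
    split => //; exact: v_agg_concave (hf q).
move=> e [g [gc hgb ->]].
move: hp hun hgb hr; case: r => [|v0 rest] hp hun hgb hr; first by case: hp.
case: hp => hm _.
rewrite hr in hgb *.
apply: (tight_ge_path hun hm _ (hf q) gc hgb hx).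
move=> y hy; apply: hD => //; rewrite hr mem_seq1 //.
Qed.
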